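(* Let $\mathcal{H}$ be a complex linear space with a non-degenerate indefinite inner product $[\cdot,\cdot]$, and let $\mathcal{H}=\mathcal{L}_+[\dot+]\mathcal{L}_-$ be a fundamental decomposition with associated inner product $\langle\cdot,\cdot\rangle_{\mathcal{L}}$ and norm $\|\cdot\|_{\mathcal{L}}$. Let $\{U(t):t\in\mathbb{R}\}$ be a one-parameter group of bijective linear operators on $\mathcal{H}$ ($U(0)=I$, $U(t+s)=U(t)U(s)$) which are unitary with respect to $[\cdot,\cdot]$, i.e. $[U(t)f,U(t)g]=[f,g]$ for all $f,g\in\mathcal{H}$, $t\in\mathbb{R}$. For $t\in\mathbb{R}$ let $\|\cdot\|_t$ be the norm associated with the fundamental decomposition $\mathcal{H}=\mathcal{L}^t_+[\dot+]\mathcal{L}^t_-$, where $\mathcal{L}^t_\pm=U(t)\mathcal{L}_\pm$. Then for every $t\neq0$ the following are equivalent: (i) $U(t)$ and $U(t)^{-1}$ are bounded operators in the pre-Hilbert space $(\mathcal{H},\langle\cdot,\cdot\rangle_{\mathcal{L}})$; (ii) the norms $\|\cdot\|_{\mathcal{L}}$ and $\|\cdot\|_t$ are equivalent on $\mathcal{H}$.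
   Context: An indefinite inner product is a Hermitian sesquilinear form $[\cdot,\cdot]$ (linear in the second argument) with vectors of both positive and negative square; non-degenerate means $[f,g]=0\ \forall g$ implies $f=0$. A subspace is positive (negative) if each nonzero vector in it has $[f,f]>0$ ($<0$). A fundamental decomposition $\mathcal{H}=\mathcal{L}_+[\dot+]\mathcal{L}_-$ is a direct sum of a positive subspace $\mathcal{L}_+$ and a negative subspace $\mathcal{L}_-$ that are $[\cdot,\cdot]$-orthogonal; its associated inner product is $\langle f,g\rangle_{\mathcal{L}}=[f_+,g_+]-[f_-,g_-]$ for $f=f_++f_-$, $g=g_++g_-$, $f_\pm,g_\pm\in\mathcal{L}_\pm$, with norm $\|f\|_{\mathcal{L}}=\langle f,f\rangle_{\mathcal{L}}^{1/2}$. Since $U(t)$ is bijective and preserves $[\cdot,\cdot]$, $\mathcal{H}=U(t)\mathcal{L}_+[\dot+]U(t)\mathcal{L}_-$ is again a fundamental decomposition; $\|\cdot\|_t$ is its associated norm. *)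

(* Defs.v *)
From HB Require Import structures.
From mathcomp Require Import all_boot all_order all_algebra.
From mathcomp Require Import boolp classical_sets reals.
From mathcomp Require Export complex.
Set Implicit Arguments. Unset Strict Implicit. Unset Printing Implicit Defensive.
Import Order.TTheory GRing.Theory Num.Theory.
Local Open Scope ring_scope.
Local Open Scope classical_set_scope.

Section Krein.
Variables (R : realType) (V : lmodType R[i]).
Local Open Scope complex_scope.

Definition kr_hermitian_sesquilinear (B : V -> V -> R[i]) : Prop :=
  (forall (a : R[i]) f g h, B f (a *: g + h) = a * B f g + B f h) /\
  (forall (a : R[i]) f g h, B (a *: f + h) g = (a ^*)%C * B f g + B h g) /\
  (forall f g, B g f = ((B f g) ^*)%C).

Definition kr_nondegenerate (B : V -> V -> R[i]) : Prop :=
  forall f, (forall g, B f g = 0) -> f = 0.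

Definition kr_indefinite (B : V -> V -> R[i]) : Prop :=
  (exists f, 0 < B f f) /\ (exists g, B g g < 0).

Definition kr_subspace (S : set V) : Prop :=
  S 0 /\ forall (a : R[i]) f g, S f -> S g -> S (a *: f + g).

Definition kr_positive_sub (B : V -> V -> R[i]) (S : set V) : Prop :=
  forall f, S f -> f != 0 -> 0 < B f f.

Definition kr_negative_sub (B : V -> V -> R[i]) (S : set V) : Prop :=
  forall f, S f -> f != 0 -> B f f < 0.

Definition kr_fundamental_decomposition (B : V -> V -> R[i]) (Lp Lm : set V) : Prop :=
  [/\ kr_subspace Lp /\ kr_subspace Lm, kr_positive_sub B Lp, kr_negative_sub B Lm,
      (forall f g, Lp f -> Lm g -> B f g = 0) &
      (forall f, Lp f -> Lm f -> f = 0) /\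
      (forall f, exists fp fm, [/\ Lp fp, Lm fm & f = fp + fm])].

Definition kr_comp_plus (Lp Lm : set V) (f : V) : V :=
  xget 0 [set p | Lp p /\ exists m, Lm m /\ f = p + m].
Definition kr_comp_minus (Lp Lm : set V) (f : V) : V := f - kr_comp_plus Lp Lm f.

Definition kr_fd_inner (B : V -> V -> R[i]) (Lp Lm : set V) (f g : V) : R[i] :=
  B (kr_comp_plus Lp Lm f) (kr_comp_plus Lp Lm g) - B (kr_comp_minus Lp Lm f) (kr_comp_minus Lp Lm g).

(* associated norm ||f||_L = <f,f>_L^(1/2)  (<f,f>_L is real and >= 0) *)
Definition kr_fd_norm (B : V -> V -> R[i]) (Lp Lm : set V) (f : V) : R :=
  Num.sqrt (complex.Re (kr_fd_inner B Lp Lm f f)).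

Definition kr_bounded_op (N : V -> R) (T : V -> V) : Prop :=
  exists c : R, forall f, N (T f) <= c * N f.

Definition kr_equivalent_norms (N1 N2 : V -> R) : Prop :=
  exists a b : R, [/\ 0 < a, 0 < b & forall f, a * N1 f <= N2 f /\ N2 f <= b * N1 f].

End Krein.

(* Main.v *)
Require Import Defs.
From HB Require Import structures.
From mathcomp Require Import all_boot all_order all_algebra.
From mathcomp Require Import boolp classical_sets reals.
From mathcomp Require Import complex.
Import Order.TTheory GRing.Theory Num.Theory.
Local Open Scope ring_scope.
Local Open Scope classical_set_scope.
Section S.
Variables (R : realType) (V : lmodType R[i]) (B : V -> V -> R[i]) (Lp Lm : set V).
Hypothesis FD : kr_fundamental_decomposition B Lp Lm.

Lemma xget_eq (P : set V) z : (exists x, P x) -> (forall x, P x -> x = z) -> xget 0 P = z.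
Proof. by move=> He H; apply: H; apply: xgetPex. Qed.

Lemma sub_in (S : set V) : kr_subspace S -> forall f g, S f -> S g -> S (f - g).
Proof. by move=> [_ HS] f g Hf Hg; have := HS (-1) g f Hg Hf; rewrite scaleN1r addrC. Qed.

Lemma decomp_uniq p m p' m' : Lp p -> Lm m -> Lp p' -> Lm m' -> p + m = p' + m' -> p = p'.
Proof.
case: FD => [[SP SM] _ _ _ [I _]] Hp Hm Hp' Hm' E.
have E2 : p - p' = m' - m.
  by rewrite -(addrK m p) E [p' + m']addrC addrAC addrK.
apply/eqP; rewrite -subr_eq0; apply/eqP; apply: I; first exact: sub_in.
by rewrite E2; apply: sub_in.
Qed.

Lemma comp_plus_eq f p m : Lp p -> Lm m -> f = p + m -> kr_comp_plus Lp Lm f = p.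
Proof.
move=> Hp Hm E; rewrite /kr_comp_plus; apply: xget_eq.
  by exists p; split => //; exists m.
by move=> x [Hx [m' [Hm' E']]]; apply: (@decomp_uniq _ _ _ _ Hx Hm' Hp Hm); rewrite -E' -E.
Qed.

Lemma norm_U (U : {linear V -> V}) : injective U -> (forall f g, B (U f) (U g) = B f g) ->
  forall g, kr_fd_norm B (U @` Lp) (U @` Lm) (U g) = kr_fd_norm B Lp Lm g.
Proof.
move=> Ui UB g.
have FD' := FD; case: FD' => [_ _ _ _ [_ D]].
have [fp [fm [Hp Hm E]]] := D g.
have P1 : kr_comp_plus Lp Lm g = fp by exact: (@comp_plus_eq _ _ _ Hp Hm E).
have P2 : kr_comp_plus (U @` Lp) (U @` Lm) (U g) = U fp.
  rewrite /kr_comp_plus; apply: xget_eq.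
    exists (U fp); split; first by exists fp.
    by exists (U fm); split; [exists fm | rewrite E linearD].
  move=> x [[x0 Hx0 <-] [m' [[m0 Hm0 <-] E']]].
  rewrite -linearD in E'; have E2 := Ui _ _ E'.
  by rewrite (@decomp_uniq _ _ _ _ Hx0 Hm0 Hp Hm) // -E2.
by rewrite /kr_fd_norm /kr_fd_inner /kr_comp_minus P1 P2 -linearB !UB.
Qed.
End S.

Theorem lemma3p5 (R : realType) (V : lmodType R[i]) (B : V -> V -> R[i])
  (Lp Lm : set V) (U : R -> {linear V -> V}) :
  kr_hermitian_sesquilinear B -> kr_nondegenerate B -> kr_indefinite B ->
  kr_fundamental_decomposition B Lp Lm ->
  (forall f, U 0 f = f) ->
  (forall t s f, U (t + s) f = U t (U s f)) ->
  (forall t, bijective (U t)) ->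
  (forall t f g, B (U t f) (U t g) = B f g) ->
  forall t : R, t != 0 ->
  ((kr_bounded_op (kr_fd_norm B Lp Lm) (U t) /\
    (forall Uinv : V -> V, cancel (U t) Uinv -> cancel Uinv (U t) ->
       kr_bounded_op (kr_fd_norm B Lp Lm) Uinv))
   <->
   kr_equivalent_norms (kr_fd_norm B Lp Lm) (kr_fd_norm B (U t @` Lp) (U t @` Lm))).
Proof.
move=> _ _ _ FD U0 UD Ubij UB t _.
have [Uinv0 K1 K2] := Ubij t.
have Ui : injective (U t) := can_inj K1.
have NU := @norm_U _ _ _ _ _ FD (U t) Ui (UB t).
have Nt f : kr_fd_norm B (U t @` Lp) (U t @` Lm) f = kr_fd_norm B Lp Lm (Uinv0 f).
  by rewrite -{1}(K2 f) NU.
have N0 f : 0 <= kr_fd_norm B Lp Lm f by exact: sqrtr_ge0.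
split.
- case=> [[c Hc] Hinv]; have [d Hd] := Hinv Uinv0 K1 K2.
  have c0 : 0 < Num.max c 1 by rewrite lt_max ltr01 orbT.
  have d0 : 0 < Num.max d 1 by rewrite lt_max ltr01 orbT.
  exists (Num.max c 1)^-1, (Num.max d 1); split; first by rewrite invr_gt0.
    by [].
  move=> f; rewrite Nt; split.
    rewrite ler_pdivrMl //.
    apply: le_trans (_ : c * kr_fd_norm B Lp Lm (Uinv0 f) <= _).
      by rewrite -{1}(K2 f) Hc.
    by apply: ler_wpM2r => //; rewrite le_max lexx.
  apply: le_trans (Hd f) _.
  by apply: ler_wpM2r => //; rewrite le_max lexx.
- case=> a [b [Ha Hb H]]; split.
    exists a^-1 => g; rewrite ler_pdivlMl //.
    by have [H1 _] := H (U t g); rewrite NU in H1.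
  move=> Ui' K1' K2'; exists b => f.
  have E : Ui' f = Uinv0 f by apply: Ui; rewrite K2 K2'.
  by rewrite E -Nt; case: (H f).
Qed.
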